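(* Let $(a_n)_{n\ge0}$ and $(b_n)_{n\ge0}$ be bounded sequences of nonnegative real numbers such that $\sum_n b_n=+\infty$ and $a_n=o(b_n)$, i.e. there is a sequence $c_n\to0$ with $a_n\le c_nb_n$ for all $n$. Then there exists an increasing function $\theta:\mathbb N\to\mathbb N$ such that $\sum_n a_{\theta(n)}<+\infty$ and $\sum_n b_{\theta(n)}=+\infty$. *)

(* Defs.v *)
From Stdlib Require Import Reals Lra Lia.
Open Scope R_scope.

Definition series_converges (u : nat -> R) : Prop :=
  exists l : R, Un_cv (fun N => sum_f_R0 u N) l.

Definition series_diverges_infty (u : nat -> R) : Prop :=
  cv_infty (fun N => sum_f_R0 u N).

(* Main.v *)
Require Import Defs.
From Stdlib Require Import Reals Lra Lia.
From Stdlib Require Import Classical ClassicalEpsilon.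
Open Scope R_scope.

Definition DD (B T : R) := (1 + Rabs T) * (1 + Rabs T + B).

Definition st (b c : nat -> R) (B : R) (f : nat -> R -> nat) : nat -> nat * R :=
  fix g n := match n with
  | O => (O, b O)
  | S k => let p := g k in
      let m := if Rle_dec (Rabs (c (S (fst p))) * DD B (snd p)) 1
               then S (fst p) else f (fst p) (snd p) in
      (m, snd p + b m)
  end.

Lemma DD_pos B T : 0 <= B -> 0 < DD B T.
Proof. intros. unfold DD. pose proof (Rabs_pos T). apply Rmult_lt_0_compat; lra. Qed.

Lemma DD_mono B T U : 0 <= B -> Rabs T <= U -> DD B T <= DD B U.
Proof.
  intros HB H. unfold DD. pose proof (Rabs_pos T).
  assert (Rabs U = U) by (apply Rabs_right; lra). rewrite H1.
  apply Rmult_le_compat; lra.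
Qed.


Lemma th_step b c B f (Hf : forall k T, (k < f k T)%nat /\ Rabs (c (f k T)) * DD B T <= 1) n :
  (fst (st b c B f n) < fst (st b c B f (S n)))%nat /\
  Rabs (c (fst (st b c B f (S n)))) * DD B (snd (st b c B f n)) <= 1 /\
  snd (st b c B f (S n)) = snd (st b c B f n) + b (fst (st b c B f (S n))).
Proof.
  simpl. destruct Rle_dec as [H|H]; simpl.
  - split; [lia|split; [lra|reflexivity]].
  - destruct (Hf (fst (st b c B f n)) (snd (st b c B f n))) as [H1 H2].
    split; [lia|split; [lra|reflexivity]].
Qed.

Theorem lemma13 (a b : nat -> R)
  (ha_nonneg : forall n, 0 <= a n) (hb_nonneg : forall n, 0 <= b n)
  (ha_bdd : exists M, forall n, a n <= M) (hb_bdd : exists M, forall n, b n <= M)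
  (hb_div : series_diverges_infty b)
  (ho : exists c : nat -> R, Un_cv c 0 /\ forall n, a n <= c n * b n) :
  exists theta : nat -> nat,
    (forall n m, (n < m)%nat -> (theta n < theta m)%nat) /\
    series_converges (fun n => a (theta n)) /\
    series_diverges_infty (fun n => b (theta n)).
Proof.
  destruct hb_bdd as [B HB]. destruct ho as [c [Hc Hac]].
  assert (HB0 : 0 <= B) by (specialize (HB O); specialize (hb_nonneg O); lra).
  assert (Hex : forall k T, exists m, (k < m)%nat /\ Rabs (c m) * DD B T <= 1).
  { intros k T. pose proof (DD_pos B T HB0) as HD.
    destruct (Hc (/ DD B T)) as [N HN]. { apply Rinv_0_lt_compat; lra. }
    exists (S (Nat.max N k)). split; [lia|].
    specialize (HN (S (Nat.max N k)) ltac:(lia)). unfold R_dist in HN.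
    rewrite Rminus_0_r in HN.
    apply Rmult_lt_compat_r with (r := DD B T) in HN; [|lra].
    rewrite Rinv_l in HN; lra. }
  set (f := fun k T => proj1_sig (constructive_indefinite_description _ (Hex k T))).
  assert (Hf : forall k T, (k < f k T)%nat /\ Rabs (c (f k T)) * DD B T <= 1).
  { intros k T. unfold f. destruct constructive_indefinite_description; simpl; auto. }
  set (th := fun n => fst (st b c B f n)).
  set (TT := fun n => snd (st b c B f n)).
  pose proof (th_step b c B f Hf) as Hs. fold th TT in Hs.
  assert (Hthdef : forall n, th n = fst (st b c B f n)) by reflexivity.
  assert (HTTdef : forall n, TT n = snd (st b c B f n)) by reflexivity.
  clearbody th TT.
  assert (Hs' : forall n, (th n < th (S n))%nat /\ Rabs (c (th (S n))) * DD B (TT n) <= 1 /\ TT (S n) = TT n + b (th (S n)))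
    by (intro n; rewrite !Hthdef, !HTTdef; apply Hs).
  clear Hs. rename Hs' into Hs.
  assert (Hmono : forall n m, (n < m)%nat -> (th n < th m)%nat).
  { intros n m H. induction H as [|m' Hm IH].
    - apply Hs.
    - destruct (Hs m') as [H1 _]. clear -H1 IH; lia. }
  assert (Hge : forall n, (n <= th n)%nat).
  { induction n. lia. destruct (Hs n) as [H1 _]. lia. }
  assert (HTsum : forall n, TT n = sum_f_R0 (fun k => b (th k)) n).
  { induction n. simpl. rewrite HTTdef, Hthdef. reflexivity. destruct (Hs n) as [_ [_ H3]]. rewrite H3, IHn. reflexivity. }
  assert (HT0 : forall n, 0 <= TT n).
  { induction n. rewrite HTTdef. apply hb_nonneg. destruct (Hs n) as [_ [_ H3]]. rewrite H3.
    specialize (hb_nonneg (th (S n))). lra. }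
  assert (HTm : forall n m, (n <= m)%nat -> TT n <= TT m).
  { intros n m H. induction H as [|m H IH]. lra. destruct (Hs m) as [_ [_ H3]]. rewrite H3.
    specialize (hb_nonneg (th (S m))). lra. }
  assert (Ha : forall n, a (th (S n)) <= / (1 + TT n) - / (1 + TT (S n))).
  { intro n. destruct (Hs n) as [_ [H2 H3]]. rewrite H3.
    set (m := th (S n)) in *. set (T := TT n) in *.
    pose proof (HT0 n) as HT. fold T in HT.
    pose proof (hb_nonneg m) as Hbm. pose proof (HB m) as HbB.
    set (x := Rabs (c m)) in *. assert (Hx : 0 <= x) by apply Rabs_pos.
    unfold DD in H2. rewrite (Rabs_right T) in H2 by lra.
    assert (Hax : a m <= x * b m).
    { eapply Rle_trans. apply Hac. apply Rmult_le_compat_r. lra. apply Rle_abs. }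
    set (F := (1 + T) * (1 + T + b m)).
    assert (HF : 0 < F) by (unfold F; apply Rmult_lt_0_compat; lra).
    assert (HFE : F <= (1+T)*(1+T+B)) by (unfold F; apply Rmult_le_compat_l; lra).
    assert (Hk : x * b m * F <= b m).
    { assert (x * b m * F <= x * b m * ((1+T)*(1+T+B))).
      { apply Rmult_le_compat_l. apply Rmult_le_pos; lra. lra. }
      assert (x * b m * ((1+T)*(1+T+B)) = b m * (x * ((1 + T) * (1 + T + B)))) by ring.
      assert (b m * (x * ((1 + T) * (1 + T + B))) <= b m * 1) by (apply Rmult_le_compat_l; lra).
      lra. }
    assert (Heq : / (1 + T) - / (1 + (T + b m)) = b m / F).
    { unfold F. field. lra. }
    rewrite Heq. assert (x * b m <= b m / F).
    { apply Rmult_le_reg_r with F. lra. unfold Rdiv. rewrite (Rmult_assoc (b m)), Rinv_l by lra; lra. }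
    lra. }
  exists th. split; [exact Hmono|split].
  - assert (Hbd : forall N, sum_f_R0 (fun k => a (th k)) N <= a (th O) + 1 - / (1 + TT N)).
    { induction N.
      - simpl. assert (0 < / (1 + TT O)) by (apply Rinv_0_lt_compat; specialize (HT0 O); lra).
        assert (/ (1 + TT O) <= 1).
        { rewrite <- Rinv_1. apply Rinv_le_contravar. lra. specialize (HT0 O); lra. }
        lra.
      - simpl. specialize (Ha N). lra. }
    destruct (growing_cv (fun N => sum_f_R0 (fun k => a (th k)) N)) as [l Hl].
    + intro n. simpl. specialize (ha_nonneg (th (S n))). lra.
    + exists (a (th O) + 1). intros x [i Hi]. rewrite Hi. specialize (Hbd i).
      assert (0 < / (1 + TT i)) by (apply Rinv_0_lt_compat; specialize (HT0 i); lra). lra.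
    + exists l. exact Hl.
  - assert (Hun : forall M, exists n, M < TT n).
    { intro M. apply NNPP. intro Hno.
      assert (Hle : forall n, TT n <= Rmax M 0).
      { intro n. destruct (Rle_dec (TT n) M). pose proof (Rmax_l M 0). lra.
        exfalso. apply Hno. exists n. lra. }
      set (M0 := Rmax M 0).
      assert (HM0 : 0 <= M0) by apply Rmax_r.
      pose proof (DD_pos B M0 HB0) as HD.
      destruct (Hc (/ DD B M0)) as [N0 HN0]. { apply Rinv_0_lt_compat; lra. }
      assert (Hnext : forall n, (N0 <= th n)%nat -> th (S n) = S (th n)).
      { intros n Hn. rewrite !Hthdef. rewrite Hthdef in Hn. simpl. destruct Rle_dec as [H|H]. reflexivity.
        exfalso. apply H.
        specialize (HN0 (S (fst (st b c B f n))) ltac:(lia)).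
        unfold R_dist in HN0. rewrite Rminus_0_r in HN0.
        pose proof (Rabs_pos (c (S (fst (st b c B f n))))).
        assert (DD B (snd (st b c B f n)) <= DD B M0).
        { apply DD_mono. lra. rewrite <- HTTdef. rewrite Rabs_right. apply Hle. apply Rle_ge, HT0. }
        assert (Rabs (c (S (fst (st b c B f n)))) * DD B (snd (st b c B f n))
                <= Rabs (c (S (fst (st b c B f n)))) * DD B M0) by (apply Rmult_le_compat_l; lra).
        apply Rmult_lt_compat_r with (r := DD B M0) in HN0; [|lra].
        rewrite Rinv_l in HN0; lra. }
      set (s := th N0).
      assert (Hj : forall j, th (N0 + j)%nat = (s + j)%nat).
      { induction j. unfold s. rewrite !Nat.add_0_r. reflexivity.
        rewrite Nat.add_succ_r, Hnext, IHj. lia. rewrite IHj. pose proof (Hge N0). unfold s. lia. }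
      assert (HTj : forall j, sum_f_R0 b (s + j) - sum_f_R0 b s <= TT (N0 + j)%nat).
      { induction j. rewrite Nat.add_0_r. specialize (HT0 (N0 + 0)%nat). lra.
        rewrite !Nat.add_succ_r. destruct (Hs (N0 + j)%nat) as [_ [_ H3]]. rewrite H3.
        replace (th (S (N0 + j))) with (S (s + j)) by (rewrite <- (Nat.add_succ_r N0 j), Hj; lia). simpl. lra. }
      destruct (hb_div (M0 + sum_f_R0 b s)) as [N HN].
      specialize (HN (s + N)%nat ltac:(lia)). specialize (HTj N). specialize (Hle (N0 + N)%nat).
      unfold M0 in *. lra. }
    intro M. destruct (Hun M) as [n Hn]. exists n. intros m Hm. rewrite <- HTsum.
    specialize (HTm n m Hm). lra.
Qed.
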